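(* Assume the standing setting below. Let $\alpha\in(0,1/6]$, $\gamma\in(\alpha,1-2\alpha]$ with $\alpha n,\gamma n$ integers, let $P_1,P_2,P_3\subseteq X$ be pairwise disjoint with $|P_1|=|P_2|=\alpha n$ and $|P_3|=\gamma n$, let $T\subseteq X$ be nonempty, let $\tau>0$, and set $\psi:=\frac1{3\alpha}R_{2\alpha(k+1)\phi_\alpha}(P_2,T)$. Let $F_c:=\mathrm{far}_{4(k+1)\phi_\alpha}(X\setminus P_1,T)$, let $\mathcal{B}_c$ be a $(\phi_\alpha/3)$-linear bin division of $(X\setminus P_1)\setminus F_c$ with respect to $T$, and let $F_d:=\mathrm{far}_{5(k+1)\phi_\alpha}(X\setminus P_1,T)$. Suppose each of $F_c$ and $\mathcal{B}_c$ is trivial or well-represented in $P_2$ for $X\setminus P_1$, and $F_d$ is trivial or well-represented in $P_3$ for $X\setminus P_1$. Let $N:=|\{x\in P_3:\rho(x,T)>\psi/(k\tau)\}|$. Then $$N\le 8(k+1)\phi_\alpha\frac{\gamma}{1-\alpha}+9k\tau.$$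
   Context: Standing setting: $(X,\rho)$ is a finite metric space with $|X|=n$; $k\ge2$ is an integer and $\delta\in(0,1)$; $\log$ is the natural logarithm; for $\alpha>0$, $\phi_\alpha:=150\log(32k/\delta)/\alpha$. For nonempty $T\subseteq X$, $\rho(x,T):=\min_{y\in T}\rho(x,y)$ and $R(S,T):=\sum_{x\in S}\rho(x,T)$; ties are broken by a fixed ordering of $X$. For $S\subseteq X$ and real $r\ge0$, $\mathrm{far}_r(S,T)$ is the set of the $\lceil r\rceil$ points of $S$ furthest from $T$; if $|S|<r$, $\mathrm{far}_r(S,T):=S$ (trivial far set). $R_r(S,T):=R(S\setminus\mathrm{far}_r(S,T),T)$. For finite $W$, $A,B\subseteq W$, $B$ is well-represented in $A$ for $W$ if $|B\cap A|/|B|\in[r/2,\frac32 r]$ with $r=|A|/|W|$; a bin division is well-represented if all its bins are. A $z$-linear bin division ($z>0$) of $W$ with respect to $T$ is a partition $(\mathcal{B}(1),\ldots,\mathcal{B}(L))$ of $W$ with: (1) if $z\le|W|$, $|\mathcal{B}(i)|\ge z(i+1)/2$ for all $i$; otherwise it is trivial, $\mathcal{B}(1):=W$; (2) $|\mathcal{B}(1)|\le\frac52 z$; (3) $|\mathcal{B}(i+1)|/|\mathcal{B}(i)|\le3/2$; (4) $\rho(x,T)\ge\rho(x',T)$ whenever $x\in\mathcal{B}(i)$, $x'\in\mathcal{B}(i+1)$. *)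

(* Defs.v *)
From mathcomp Require Import all_boot all_order all_algebra.
From mathcomp Require Import reals exp.
Set Implicit Arguments. Unset Strict Implicit. Unset Printing Implicit Defensive.
Import Order.TTheory GRing.Theory Num.Theory.
Local Open Scope ring_scope.

Section Defs.
Variables (R : realType) (X : finType) (rho : X -> X -> R).

Definition is_metric : Prop :=
  [/\ forall x y, 0 <= rho x y,
      forall x y, rho x y = 0 <-> x = y,
      forall x y, rho x y = rho y x &
      forall x y z, rho x z <= rho x y + rho y z].

(* rho(x,T) = min_{y in T} rho(x,y)  (T nonempty; 0 by convention if T empty) *)
Definition distT (T : {set X}) (x : X) : R :=
  if [pick y in T] is Some y0 then \big[Num.min/rho x y0]_(y in T) rho x y else 0.

Definition Rcost (S T : {set X}) : R := \sum_(x in S) distT T x.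

Definition further (T : {set X}) (y x : X) : bool :=
  (distT T x < distT T y) ||
  ((distT T y == distT T x) && (enum_rank y < enum_rank x)%N).

(* far_r(S,T): the ceil(r) points of S furthest from T (S itself if |S| < r) *)
Definition far (r : R) (S T : {set X}) : {set X} :=
  if (#|S|%:R < r) then S
  else [set x in S | (#|[set y in S | further T y x]|%:Z < Num.ceil r)%R].

Definition far_trivial (r : R) (S : {set X}) : bool := #|S|%:R < r.

Definition Rr (r : R) (S T : {set X}) : R := Rcost (S :\: far r S T) T.

Definition well_rep (W A B : {set X}) : Prop :=
  let r : R := #|A|%:R / #|W|%:R in
  r / 2 <= #|B :&: A|%:R / #|B|%:R <= 3 / 2 * r.

Definition well_rep_div (W A : {set X}) (B : seq {set X}) : Prop :=
  forall b, b \in B -> well_rep W A b.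

(* z-linear bin division (B(1),...,B(L)) = (nth set0 B 0, ..., nth set0 B (L-1)) *)
Definition is_linear_bin_division (z : R) (W T : {set X}) (B : seq {set X}) : Prop :=
  [/\ (0 < size B)%N,
      \bigcup_(b <- B) b = W &
      forall i j, (i < j < size B)%N -> [disjoint nth set0 B i & nth set0 B j]] /\
  [/\ (z <= #|W|%:R -> forall i, (i < size B)%N ->
          z * (i.+2)%:R / 2 <= #|nth set0 B i|%:R),
      (#|W|%:R < z -> B = [:: W]),
      #|nth set0 B 0|%:R <= 5 / 2 * z,
      (forall i, (i.+1 < size B)%N ->
          #|nth set0 B i.+1|%:R / #|nth set0 B i|%:R <= 3 / 2 :> R) &
      (forall i x x', (i.+1 < size B)%N -> x \in nth set0 B i ->
          x' \in nth set0 B i.+1 -> distT T x' <= distT T x)].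

Definition bin_div_trivial (z : R) (W : {set X}) : bool := #|W|%:R < z.

End Defs.

Definition phi (R : realType) (k : nat) (delta alpha : R) : R :=
  150 * ln (32 * k%:R / delta) / alpha.

Arguments far_trivial {R X} r S.
Arguments bin_div_trivial {R X} z W.
Arguments well_rep R {X} W A B.
Arguments well_rep_div R {X} W A B.

(* Main.v *)
Require Import Defs.
From mathcomp Require Import all_boot all_order all_algebra.
From mathcomp Require Import reals exp.
From mathcomp Require Import zify ring lra.
Import Order.TTheory GRing.Theory Num.Theory.
Local Open Scope ring_scope.

Module Helpers.
Set Implicit Arguments. Unset Strict Implicit. Unset Printing Implicit Defensive.

Section Far.
Variables (R : realType) (X : finType) (rho : X -> X -> R) (T : {set X}).
Local Notation d := (distT rho T).
Local Notation fur := (further rho T).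

Lemma fur_irr x : ~~ fur x x.
Proof. by rewrite /further ltxx eqxx ltnn. Qed.

Lemma fur_trans a b c : fur a b -> fur b c -> fur a c.
Proof.
rewrite /further => /orP[h1|/andP[/eqP e1 h1]] /orP[h2|/andP[/eqP e2 h2]].
- by rewrite (lt_trans h2 h1).
- by rewrite -e2 h1.
- by rewrite e1 h2.
- by rewrite e1 -e2 eqxx (ltn_trans h1 h2) orbT.
Qed.

Lemma fur_total a b : a != b -> fur a b || fur b a.
Proof.
move=> ab; rewrite /further; case: (ltgtP (d a) (d b)) => //= e.
by rewrite -neq_ltn; apply: contra ab => /eqP/val_inj/enum_rank_inj ->.
Qed.

Definition rk (S : {set X}) x := #|[set y in S | fur y x]|.

Lemma rk_lt (S : {set X}) x y : x \in S -> fur x y -> (rk S x < rk S y)%N.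
Proof.
move=> xS fxy; apply: proper_card; apply/properP; split.
  apply/subsetP => z; rewrite !inE => /andP[-> h] /=; exact: fur_trans h fxy.
exists x; rewrite !inE ?xS ?fxy // (negbTE (fur_irr _)) ?andbF //.

Qed.

Lemma rk_inj (S : {set X}) x y : x \in S -> y \in S -> rk S x = rk S y -> x = y.
Proof.
move=> xS yS e; apply/eqP; apply: contraT => nxy.
case/orP: (fur_total nxy) => h.
  by move: (rk_lt xS h); rewrite e ltnn.
by move: (rk_lt yS h); rewrite e ltnn.
Qed.

Local Notation low S m := [set x in S | (rk S x < m)%N].

Lemma card_low_le (S : {set X}) m : (#|low S m| <= m)%N.
Proof.
case: (set_0Vmem (low S m)) => [->|[x0 x0L]]; first by rewrite cards0.
case: (@arg_maxnP _ x0 (mem (low S m)) (rk S) x0L) => x1 x1L hmax.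
have {}x1L : x1 \in low S m := x1L.
move: (x1L); rewrite inE => /andP[x1S x1m].
suff : (#|low S m| <= (rk S x1).+1)%N by move=> h; exact: leq_trans h x1m.
rewrite [#|low S m|](cardsD1 x1) x1L add1n ltnS.
apply: subset_leq_card; apply/subsetP => y; rewrite !inE => /andP[nyx /andP[yS ym]].
rewrite yS /=.
case/orP: (fur_total nyx) => // h.
have h1 : (rk S y <= rk S x1)%N by apply: hmax; change (y \in low S m); rewrite inE yS ym.
have := rk_lt x1S h; lia.
Qed.

Lemma card_low_ge (S : {set X}) m : (m <= #|S|)%N -> (m <= #|low S m|)%N.
Proof.
move=> mS; rewrite leqNgt; apply/negP => small.
have : exists x, x \in S :\: low S m.
  apply/set0Pn; rewrite -card_gt0 cardsD.
  have : (#|S :&: low S m| <= #|low S m|)%N by apply: subset_leq_card; apply: subsetIr.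
  lia.
case=> x0 x0D.
case: (@arg_minnP _ x0 (mem (S :\: low S m)) (rk S) x0D) => x1 x1D hmin.
have {}x1D : x1 \in S :\: low S m := x1D.
move: (x1D); rewrite !inE => /andP[nl x1S]; rewrite x1S /= -leqNgt in nl.
have : (rk S x1 <= #|low S m|)%N.
  apply: subset_leq_card; apply/subsetP => y; rewrite !inE => /andP[yS fy].
  rewrite yS /=; apply: contraT; rewrite -leqNgt => ym.
  have := hmin y; rewrite !inE yS -leqNgt ym => /(_ isT) h1.
  have := rk_lt yS fy; lia.
lia.
Qed.

Lemma low_order (S : {set X}) m x y : x \in low S m -> y \in S -> y \notin low S m -> d y <= d x.
Proof.
rewrite !inE => /andP[xS xm] yS; rewrite yS /= -leqNgt => my.
rewrite leNgt; apply/negP => h.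
have : fur y x by rewrite /further h.
move/(rk_lt yS); lia.
Qed.


Lemma ceil_nat (r : R) : 0 <= r ->
  exists m : nat, [/\ Num.ceil r = m%:Z, r <= m%:R & m%:R < r + 1].
Proof.
move=> r0; have z0 : 0 <= Num.ceil r by rewrite ceil_ge0; lra.
exists `|Num.ceil r|%N; have e := gez0_abs z0.
have h1 := ceil_ge r; have h2 := ceilB1_lt r.
have e2 : (`|Num.ceil r|%N)%:R = (Num.ceil r)%:~R :> R by rewrite -{2}e.
split => //; rewrite e2 //.
by move: h2; rewrite intrB /=; lra.
Qed.

Lemma far_low (r : R) (S : {set X}) : 0 <= r -> ~~ (#|S|%:R < r) ->
  exists m : nat, [/\ far rho r S T = low S m, Num.ceil r = m%:Z, r <= m%:R, m%:R < r + 1 & (m <= #|S|)%N].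
Proof.
move=> r0 nt; have [m [e h1 h2]] := ceil_nat r0.
exists m; split => //.
  rewrite /far (negbTE nt) e; apply/setP => x; rewrite !inE ltz_nat //.
have hr : r <= #|S|%:R by rewrite leNgt.
have : Num.ceil r <= (#|S|)%:Z by rewrite ceil_le_int; exact: hr.
by rewrite e lez_nat.
Qed.

Lemma far_sub r (S : {set X}) : far rho r S T \subset S.
Proof.
rewrite /far; case: ifP => _ //; apply/subsetP => x; rewrite inE => /andP[] //.
Qed.

Lemma far_card_le r (S : {set X}) : 0 <= r -> #|far rho r S T|%:R <= r + 1.
Proof.
move=> r0; case: (boolP (#|S|%:R < r)) => h.
  by rewrite /far h; lra.
have [m [-> _ h1 h2 h3]] := far_low r0 h.
apply: le_trans (ltW h2); rewrite ler_nat; exact: card_low_le.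
Qed.

Lemma far_card_ge r (S : {set X}) : 0 <= r -> ~~ (#|S|%:R < r) -> r <= #|far rho r S T|%:R.
Proof.
move=> r0 h; have [m [-> _ h1 h2 h3]] := far_low r0 h.
apply: le_trans h1 _; rewrite ler_nat; exact: card_low_ge.
Qed.

Lemma far_order r (S : {set X}) x y : 0 <= r -> x \in far rho r S T -> y \in S ->
  y \notin far rho r S T -> d y <= d x.
Proof.
move=> r0; case: (boolP (#|S|%:R < r)) => h.
  by rewrite /far h => _ ->.
have [m [-> _ h1 h2 h3]] := far_low r0 h; exact: low_order.
Qed.

Lemma far_mono r1 r2 (S : {set X}) : 0 <= r1 -> r1 <= r2 -> ~~ (#|S|%:R < r2) ->
  far rho r1 S T \subset far rho r2 S T.
Proof.
move=> r10 r12 h2.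
have h1 : ~~ (#|S|%:R < r1) by move: h2; rewrite -!leNgt => h; lra.
have [m1 [e1 f1 a1 b1 c1]] := far_low r10 h1.
have [m2 [e2 f2 a2 b2 c2]] := far_low (le_trans r10 r12) h2.
rewrite e1 e2; apply/subsetP => x; rewrite !inE => /andP[-> xm] /=.
have : Num.ceil r1 <= Num.ceil r2 by apply: le_ceil.
rewrite f1 f2 lez_nat => h; exact: leq_trans xm h.
Qed.

End Far.


Section Bins.
Variables (R : realType) (X : finType) (d : X -> R) (Bc : seq {set X}) (P2 W : {set X}) (D b0 rr : R).
Local Notation B i := (nth set0 Bc i).
Hypotheses (hU : \bigcup_(b <- Bc) b = W)
  (hdisj : forall i j, (i < j < size Bc)%N -> [disjoint B i & B j])
  (hB0 : #|B 0|%:R <= b0)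
  (hratio : forall i, (i.+1 < size Bc)%N -> #|B i.+1|%:R / #|B i|%:R <= 3 / 2 :> R)
  (hord : forall i x x', (i.+1 < size Bc)%N -> x \in B i -> x' \in B i.+1 -> d x' <= d x)
  (hpos : forall i, (i < size Bc)%N -> (0 < #|B i|)%N)
  (hwr : forall i, (i < size Bc)%N -> rr / 2 * #|B i|%:R <= #|B i :&: P2|%:R).

Definition Ub j0 : {set X} := [set x | has (fun i => x \in B i) (iota 0 j0)].
Definition sb j0 : R := \sum_(0 <= i < j0) #|B i|%:R.

Lemma in_Ub x j0 : reflect (exists2 i, (i < j0)%N & x \in B i) (x \in Ub j0).
Proof.
rewrite inE; apply: (iffP hasP) => [[i]|[i hi xi]].
  by rewrite mem_iota add0n => /andP[_ h] xi; exists i.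
by exists i => //; rewrite mem_iota add0n.
Qed.

Lemma Ub_S j0 : Ub j0.+1 = Ub j0 :|: B j0.
Proof.
apply/setP => x; rewrite !inE -addn1 iotaD has_cat /= orbF //.
Qed.

Lemma sb_S j0 : sb j0.+1 = sb j0 + #|B j0|%:R.
Proof. by rewrite /sb big_nat_recr. Qed.

Lemma sb_ge0 j0 : 0 <= sb j0.
Proof. by apply: sumr_ge0 => i _; apply: ler0n. Qed.

Lemma card_Ub j0 : #|Ub j0|%:R <= sb j0.
Proof.
elim: j0 => [|j0 IH].
  have -> : Ub 0 = set0 by apply/setP => x; rewrite !inE.
  by rewrite cards0 /sb big_geq.
rewrite Ub_S sb_S; apply: le_trans (lerD IH (lexx _)).
by rewrite -natrD ler_nat (leq_card_setU _ _).1.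
Qed.

Lemma card_UbP2 j0 : (j0 <= size Bc)%N -> rr / 2 * sb j0 <= #|Ub j0 :&: P2|%:R.
Proof.
elim: j0 => [|j0 IH] hj.
  by rewrite /sb big_geq // mulr0.
rewrite Ub_S sb_S setIUl cardsU.
have -> : Ub j0 :&: P2 :&: (B j0 :&: P2) = set0.
  apply/setP => x; rewrite !in_setI in_set0; apply/negP => /andP[/andP[/in_Ub[i hi xi] _] /andP[xj _]].
  have := hdisj (i:=i) (j:=j0); rewrite hi hj => /(_ isT) /disjointFr /(_ xi).
  by rewrite xj.
rewrite cards0 subn0 natrD mulrDr.
apply: lerD; first by apply: IH; exact: ltnW.
exact: hwr.
Qed.

Lemma Ub_size : Ub (size Bc) = W.
Proof.
apply/setP => x; rewrite -hU bigcup_seq; apply/in_Ub/bigcupP.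
  by case=> i hi xi; exists (B i) => //; exact: mem_nth.
by case=> b /(nthP set0)[i hi <-] xi; exists i.
Qed.

Lemma Ub_sub j0 : Ub j0 \subset W.
Proof.
rewrite -Ub_size; apply/subsetP => x /in_Ub[i hi xi].
case: (ltnP i (size Bc)) => his; first by apply/in_Ub; exists i.
by rewrite nth_default // inE in xi.
Qed.

Lemma B_bound j0 : (j0 < size Bc)%N -> #|B j0|%:R <= sb j0 / 2 + b0.
Proof.
elim: j0 => [|j0 IH] hj.
  by rewrite /sb big_geq // mul0r add0r.
have h1 := IH (ltnW hj).
have h2 := hratio hj.
have p : 0 < #|B j0|%:R :> R by rewrite ltr0n; apply: hpos; exact: ltnW.
rewrite ler_pdivrMr // in h2.
rewrite sb_S; lra.
Qed.

Definition jb := find (fun b : {set X} => [exists y in b, d y <= D]) Bc.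

Lemma before_j i x : (i < jb)%N -> x \in B i -> D < d x.
Proof.
move=> hi xi; have := before_find set0 hi.
move/negbT/existsPn/(_ x); rewrite xi /=; rewrite -ltNge //.
Qed.

Lemma after_j n x : (jb + n.+1 < size Bc)%N -> x \in B (jb + n.+1) -> d x <= D.
Proof.
elim: n x => [|n IH] x hs xi.
  have hj : (jb < size Bc)%N by lia.
  have := nth_find set0 (a:= fun b : {set X} => [exists y in b, d y <= D]) (s:=Bc).
  rewrite has_find hj => /(_ isT) /existsP[y /andP[yB yD]].
  apply: le_trans yD; apply: (hord (i:=jb)) => //; first by rewrite -addn1.
  by rewrite -addn1.
have hs' : (jb + n.+1 < size Bc)%N by lia.
have /card_gt0P[y yB] := hpos hs'.
apply: le_trans (IH y hs' yB).
apply: (hord (i:= jb + n.+1)) yB _; rewrite -addnS //.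
Qed.

Lemma bins_main : (0 < size Bc)%N ->
  [/\ #|[set x in W | D < d x]|%:R <= 3 / 2 * sb jb + b0,
      rr / 2 * sb jb <= #|Ub jb :&: P2|%:R,
      (forall x, x \in Ub jb -> D < d x) & Ub jb \subset W].
Proof.
move=> s0; split; last exact: Ub_sub.
- have hb0 : 0 <= b0 by apply: le_trans hB0; apply: ler0n.
  have sj := sb_ge0 jb.
  case: (ltnP jb (size Bc)) => hj; last first.
    have e : jb = size Bc by apply/eqP; rewrite eqn_leq hj find_size.
    have h1 : #|[set x in W | D < d x]|%:R <= sb jb.
      apply: le_trans (card_Ub _); rewrite e Ub_size ler_nat.
      by apply: subset_leq_card; apply/subsetP => x; rewrite inE => /andP[].
    lra.
  have h1 : #|[set x in W | D < d x]|%:R <= sb jb.+1.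
    apply: le_trans (card_Ub _); rewrite ler_nat.
    apply: subset_leq_card; apply/subsetP => x; rewrite inE => /andP[xW Dx].
    move: xW; rewrite -Ub_size => /in_Ub[i hi xi].
    case: (ltnP jb i) => hji; last by apply/in_Ub; exists i.
    have e : i = jb + (i - jb - 1).+1 by lia.
    rewrite e in hi xi.
    by move: (after_j hi xi); rewrite leNgt Dx.
  have h2 := B_bound hj.
  rewrite sb_S in h1; lra.
- by apply: card_UbP2; exact: find_size.
- by move=> x /in_Ub[i hi xi]; exact: before_j xi.
Qed.

End Bins.


Lemma ln_lb (R : realType) (x : R) : 2 <= x -> 1 / 2 <= ln x.
Proof.
move=> x2; have xp : 0 < x by lra.
have e : sequences.expR (ln x) = x by apply: lnK; rewrite posrE.
have := expR_ge1Dx (- ln x); rewrite expRN e.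
have : x^-1 <= 2^-1 by rewrite lef_pV2 ?posrE //; lra.
lra.
Qed.

Lemma distT_ge0 (R : realType) (X : finType) (rho : X -> X -> R) T x :
  is_metric rho -> 0 <= distT rho T x.
Proof.
case=> h0 _ _ _; rewrite /distT; case: pickP => // y _.
elim/big_ind: _ => //; by move=> a b ha hb; rewrite le_min ha hb.
Qed.

Lemma well_rep_bounds (R : realType) (X : finType) (W A B : {set X}) :
  well_rep R W A B -> (0 < #|A|)%N -> (0 < #|W|)%N ->
  [/\ (0 < #|B|)%N,
      (#|A|%:R / #|W|%:R) / 2 * #|B|%:R <= #|B :&: A|%:R :> R &
      #|B :&: A|%:R <= 3 / 2 * (#|A|%:R / #|W|%:R) * #|B|%:R :> R].
Proof.
rewrite /well_rep => /andP[h1 h2] A0 W0.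
have rp : 0 < #|A|%:R / #|W|%:R :> R by apply: divr_gt0; rewrite ltr0n.
have B0 : (0 < #|B|)%N.
  rewrite lt0n; apply/negP => /eqP e; move: h1; rewrite e invr0 mulr0; lra.
have Bp : 0 < #|B|%:R :> R by rewrite ltr0n.
split => //.
  by rewrite -ler_pdivlMr.
by rewrite -ler_pdivrMr.
Qed.

End Helpers.
Import Helpers.
Unset Implicit Arguments. Set Strict Implicit.

Theorem lemma9 (R : realType) (X : finType) (rho : X -> X -> R)
  (k : nat) (delta alpha gamma tau : R)
  (P1 P2 P3 T : {set X}) (Bc : seq {set X}) :
  is_metric rho ->
  (2 <= k)%N ->
  0 < delta < 1 ->
  0 < alpha <= 1 / 6 ->
  alpha < gamma <= 1 - 2 * alpha ->
  (exists a : nat, alpha * #|X|%:R = a%:R) ->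
  (exists c : nat, gamma * #|X|%:R = c%:R) ->
  [disjoint P1 & P2] -> [disjoint P1 & P3] -> [disjoint P2 & P3] ->
  #|P1|%:R = alpha * #|X|%:R ->
  #|P2|%:R = alpha * #|X|%:R ->
  #|P3|%:R = gamma * #|X|%:R ->
  T != set0 ->
  0 < tau ->
  let ph := phi k delta alpha in
  let psi := 1 / (3 * alpha) * Rr rho (2 * alpha * (k.+1)%:R * ph) P2 T in
  let Fc := far rho (4 * (k.+1)%:R * ph) (~: P1) T in
  let Fd := far rho (5 * (k.+1)%:R * ph) (~: P1) T in
  is_linear_bin_division rho (ph / 3) ((~: P1) :\: Fc) T Bc ->
  (far_trivial (4 * (k.+1)%:R * ph) (~: P1) \/ well_rep R (~: P1) P2 Fc) ->
  (bin_div_trivial (ph / 3) ((~: P1) :\: Fc) \/ well_rep_div R (~: P1) P2 Bc) ->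
  (far_trivial (5 * (k.+1)%:R * ph) (~: P1) \/ well_rep R (~: P1) P3 Fd) ->
  let N := #|[set x in P3 | psi / (k%:R * tau) < distT rho T x]| in
  N%:R <= 8 * (k.+1)%:R * ph * (gamma / (1 - alpha)) + 9 * k%:R * tau.
Proof.
move=> hm k2 /andP[d0 d1] /andP[a0 a6] /andP[ag g1] _ _ d12 d13 d23 c1 c2 c3 Tn tau0.
move=> ph psi Fc Fd hbins hFc hBc hFd; cbv zeta.
set N := #|[set x in P3 | _]|.
have [t0 t0T] : exists t, t \in T by apply/set0Pn.
have X0 : (0 < #|X|)%N by apply/card_gt0P; exists t0.
set n := #|X|%:R in c1 c2 c3.
have n0 : 0 < n by rewrite /n ltr0n.
set W := ~: P1 in Fc Fd hbins hFc hBc hFd *.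
have ua : 0 < 1 - alpha by lra.
have cW : #|W|%:R = (1 - alpha) * n.
  have h := cardsC P1; have : (#|P1| + #|W|)%:R = n :> R by rewrite /W h.
  rewrite natrD c1; lra.
have W0 : (0 < #|W|)%N by rewrite -(ltr0n R) cW mulr_gt0.
have P2W : P2 \subset W by rewrite /W -disjoints_subset disjoint_sym.
have P3W : P3 \subset W by rewrite /W -disjoints_subset disjoint_sym.
have P20 : (0 < #|P2|)%N by rewrite -(ltr0n R) c2 mulr_gt0.
have P30 : (0 < #|P3|)%N by rewrite -(ltr0n R) c3 mulr_gt0 //; lra.
set g := gamma / (1 - alpha).
have gpos : 0 < g by rewrite /g divr_gt0 //; lra.
have hg3 : #|P3|%:R / #|W|%:R = g.
  rewrite c3 cW /g; field; apply/andP; split; rewrite ?lt0r_neq0 //; lra.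
pose rr : R := #|P2|%:R / #|W|%:R.
have hrr : rr = alpha / (1 - alpha).
  rewrite /rr c2 cW; field; apply/andP; split; rewrite ?lt0r_neq0 //; lra.
have rra : alpha <= rr.
  rewrite hrr ler_pdivlMr //; nra.
have aph : alpha * ph = 150 * ln (32 * k%:R / delta).
  rewrite /ph /phi; field; rewrite lt0r_neq0 //.
have kk2 : 2 <= k%:R :> R by rewrite (ler_nat R 2 k).
have lnb : 1 / 2 <= ln (32 * k%:R / delta).
  apply: ln_lb; rewrite ler_pdivlMr //; lra.
have aph75 : 75 <= alpha * ph by lra.
have ph0 : 0 < ph.
  rewrite ltNge; apply/negP => h.
  have : alpha * ph <= 0 by rewrite pmulr_rle0.
  lra.
have ph450 : 450 <= ph.
  have : alpha * ph <= 1 / 6 * ph by rewrite ler_wpM2r // ltW.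
  lra.
have k1e : (k.+1)%:R = k%:R + 1 :> R by rewrite -natr1.
have K3 : 3 * ph <= (k.+1)%:R * ph by apply: ler_wpM2r; [exact: ltW | lra].
have kt0 : 0 <= 9 * k%:R * tau by rewrite !mulr_ge0 //; lra.
case: (boolP (far_trivial (5 * (k.+1)%:R * ph) W)) => hFdt.
  have hN : N%:R <= #|P3|%:R :> R.
    rewrite ler_nat; apply: subset_leq_card; apply/subsetP => x; rewrite inE => /andP[] //.
  rewrite /far_trivial in hFdt.
  have e3 : #|P3|%:R = g * #|W|%:R by rewrite -hg3 divfK // pnatr_eq0 -lt0n.
  have : g * #|W|%:R < g * (5 * (k.+1)%:R * ph) by rewrite ltr_pM2l.
  have : 0 <= g * ((k.+1)%:R * ph) by rewrite mulr_ge0 // ?ltW // mulr_gt0 //; lra.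
  lra.
have wFd : well_rep R W P3 Fd by case: hFd => // h; by rewrite h in hFdt.
have r5 : 0 <= 5 * (k.+1)%:R * ph by clear -K3 ph450; lra.
have Fd_ge : 5 * (k.+1)%:R * ph <= #|Fd|%:R by apply: far_card_ge.
have Fd_le : #|Fd|%:R <= 5 * (k.+1)%:R * ph + 1 by apply: far_card_le.
have [Fd0 _ hFd3] := well_rep_bounds wFd P30 W0.
rewrite hg3 in hFd3.
have eN : N = #|[set x in P3 | psi / (k%:R * tau) < distT rho T x]| by [].
set NS := [set x in P3 | _ < _] in eN.
have hsplit : #|NS| = (#|NS :&: Fd| + #|NS :\: Fd|)%N by rewrite cardsID.
have h1 : (#|NS :&: Fd| <= #|Fd :&: P3|)%N.
  apply: subset_leq_card; apply/subsetP => x; rewrite !inE => /andP[/andP[-> _] ->] //.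
have bnd : 3 / 2 * g * #|Fd|%:R <= 8 * (k.+1)%:R * ph * g.
  have : g * #|Fd|%:R <= g * (5 * (k.+1)%:R * ph + 1) by rewrite ler_wpM2l // ltW.
  have : 0 <= g * ((k.+1)%:R * ph - 3) by rewrite mulr_ge0 // ?ltW //; lra.
  lra.
case: (leP (#|NS :\: Fd|%:R) (9 * k%:R * tau)) => hM.
  rewrite eN hsplit natrD.
  have : #|NS :&: Fd|%:R <= #|Fd :&: P3|%:R :> R by rewrite ler_nat.
  lra.
exfalso.
have [x0 x0N] : exists x0, x0 \in NS :\: Fd.
  apply/set0Pn; rewrite -card_gt0 -(ltr0n R); clear -hM kt0; lra.
move: x0N; rewrite !inE => /andP[x0Fd /andP[x0P3 x0D]].
set D := psi / (k%:R * tau) in x0D NS hM hsplit h1 eN.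
have x0W : x0 \in W by apply: (subsetP P3W).
have FdD : forall y, y \in Fd -> D < distT rho T y.
  move=> y yFd; apply: lt_le_trans x0D _; exact: (far_order r5 yFd x0W x0Fd).
have r4 : 0 <= 4 * (k.+1)%:R * ph by clear -K3 ph450; lra.
have r45 : 4 * (k.+1)%:R * ph <= 5 * (k.+1)%:R * ph by clear -K3 ph450; lra.
have FcFd : Fc \subset Fd by apply: far_mono.
have hFct : ~~ far_trivial (4 * (k.+1)%:R * ph) W.
  by move: hFdt; rewrite /far_trivial -!leNgt => h; clear -h K3 ph450; lra.
have wFc : well_rep R W P2 Fc by case: hFc => // h; by rewrite h in hFct.
have Fc_ge : 4 * (k.+1)%:R * ph <= #|Fc|%:R by apply: far_card_ge.
have Fc_le : #|Fc|%:R <= 4 * (k.+1)%:R * ph + 1 by apply: far_card_le.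
have [Fc0 hFc2 _] := well_rep_bounds wFc P20 W0.
rewrite -/rr in hFc2.
have FdW : Fd \subset W by apply: far_sub.
set W' := W :\: Fc in hbins hBc.
set C := [set x in W' | D < distT rho T x].
have CM : (#|NS :\: Fd| + (#|Fd| - #|Fc|) <= #|C|)%N.
  have e1 : #|Fd :\: Fc| = (#|Fd| - #|Fc|)%N by rewrite cardsD (setIidPr FcFd).
  have e2 : #|(NS :\: Fd) :|: (Fd :\: Fc)| = (#|NS :\: Fd| + #|Fd :\: Fc|)%N.
    rewrite cardsU; have -> : (NS :\: Fd) :&: (Fd :\: Fc) = set0.
      by apply/setP => x; rewrite !inE; case: (x \in Fd); rewrite ?andbF.
    by rewrite cards0 subn0.
  rewrite -e1 -e2; apply: subset_leq_card; apply/subsetP => x; rewrite !inE.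
  case/orP => [/andP[xFd /andP[xP3 xD]]|/andP[xFc xFd]].
    have xFc : x \notin Fc by apply: contra xFd; exact: (subsetP FcFd).
    by have := subsetP P3W x xP3; rewrite inE => ->; rewrite xFc xD.
  by have := subsetP FdW x xFd; rewrite inE => ->; rewrite xFc FdD.
have FcFd' : (#|Fc| <= #|Fd|)%N by apply: subset_leq_card.
have CMr : #|NS :\: Fd|%:R + #|Fd|%:R - #|Fc|%:R <= #|C|%:R :> R.
  by rewrite -addrA -natrB // -natrD ler_nat.
have CW' : (#|C| <= #|W'|)%N.
  by apply: subset_leq_card; apply/subsetP => x; rewrite inE => /andP[].
case: (boolP (bin_div_trivial (ph / 3) W')) => hbt.
  rewrite /bin_div_trivial in hbt.
  have hCW : #|C|%:R <= #|W'|%:R :> R by rewrite ler_nat.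
  clear -CMr hM kt0 Fd_ge Fc_le K3 ph450 hbt hCW; lra.
have wB : well_rep_div R W P2 Bc by case: hBc => // h; by rewrite h in hbt.
case: hbins => [[s0 hU hdisj] [_ _ hB0 hratio hord]].
have hBb : forall i, (i < size Bc)%N -> (0 < #|nth set0 Bc i|)%N /\ rr / 2 * #|nth set0 Bc i|%:R <= #|nth set0 Bc i :&: P2|%:R.
  move=> i hi; have [h0 h1' _] := well_rep_bounds (wB _ (mem_nth set0 hi)) P20 W0.
  by split.
have hpos : forall i, (i < size Bc)%N -> (0 < #|nth set0 Bc i|)%N.
  by move=> i /hBb[].
have hwr : forall i, (i < size Bc)%N ->
    rr / 2 * #|nth set0 Bc i|%:R <= #|nth set0 Bc i :&: P2|%:R.
  by move=> i /hBb[].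
have [hCb hV hVD hVW] := bins_main (d:=distT rho T) D
  hU hdisj hB0 hratio hord hpos hwr s0.
set sj := @sb R X Bc (jb _ Bc D) in hCb hV.
set U := Ub Bc (jb _ Bc D) in hV hVD hVW.
set V := U :&: P2 in hV.
have Vdis : V :&: (Fc :&: P2) = set0.
  apply/setP => x; rewrite !in_setI in_set0; apply/negP => /andP[/andP[xU _] /andP[xFc _]].
  by have := subsetP hVW x xU; rewrite !inE xFc.
set Q := V :|: (Fc :&: P2).
have cQ : #|Q| = (#|V| + #|Fc :&: P2|)%N by rewrite cardsU Vdis cards0 subn0.
have QP2 : Q \subset P2.
  apply/subsetP => x; rewrite in_setU !in_setI => /orP[/andP[_ ->]|/andP[_ ->]] //.
have QD : forall x, x \in Q -> D < distT rho T x.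
  move=> x; rewrite in_setU !in_setI => /orP[/andP[xU _]|/andP[xFc _]]; first exact: hVD.
  by apply: FdD; apply: (subsetP FcFd).
have aK : 0 <= alpha * ((k.+1)%:R * ph) by apply: mulr_ge0; clear -a0 K3 ph450; lra.
have r2 : 0 <= 2 * alpha * (k.+1)%:R * ph by clear -aK; lra.
set far2 := far rho (2 * alpha * (k.+1)%:R * ph) P2 T.
have f2le : #|far2|%:R <= 2 * alpha * (k.+1)%:R * ph + 1 by apply: far_card_le.
set Qr := Q :\: far2.
have cQr : (#|Q| <= #|Qr| + #|far2|)%N.
  have := cardsID far2 Q.
  have : (#|Q :&: far2| <= #|far2|)%N by apply: subset_leq_card; apply: subsetIr.
  rewrite -/Qr => a b; clear -a b; lia.
have RrE : Rr rho (2 * alpha * (k.+1)%:R * ph) P2 T = \sum_(x in P2 :\: far2) distT rho T x by [].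
have sub1 : Qr \subset P2 :\: far2 by apply: setSD.
have sumQ : \sum_(x in Qr) distT rho T x <= \sum_(x in P2 :\: far2) distT rho T x.
  rewrite [X in _ <= X](big_setID Qr) /= (setIidPr sub1) lerDl.
  by apply: sumr_ge0 => x _; exact: distT_ge0.
have hQr : (#|V| + #|Fc :&: P2| <= #|Qr| + #|far2|)%N by rewrite -cQ.
have hQrR : #|V|%:R + #|Fc :&: P2|%:R <= #|Qr|%:R + #|far2|%:R :> R.
  by rewrite -!natrD ler_nat.
have rr0 : 0 <= rr by clear -rra a0; lra.
have pFc : rr * (4 * (k.+1)%:R * ph) <= rr * #|Fc|%:R by apply: ler_wpM2l.
have hsj : 2 / 3 * (#|NS :\: Fd|%:R + (k.+1)%:R * ph - 1 - 5 / 6 * ph) <= sj.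
  clear -hCb CMr Fd_ge Fc_le; lra.
have psj : rr * (2 / 3 * (#|NS :\: Fd|%:R + (k.+1)%:R * ph - 1 - 5 / 6 * ph)) <= rr * sj.
  by apply: ler_wpM2l.
have p1 : rr * (9 * k%:R * tau) <= rr * #|NS :\: Fd|%:R.
  by apply: ler_wpM2l => //; apply: ltW.
have p2 : 0 <= (rr - alpha) * (9 * k%:R * tau).
  by apply: mulr_ge0 => //; clear -rra; lra.
have p3 : 0 <= (rr - alpha) * ((k.+1)%:R * ph - 1 - 5 / 6 * ph).
  by apply: mulr_ge0; clear -rra K3 ph450; lra.
have p4 : 0 <= alpha * ((k.+1)%:R * ph - 3 * ph).
  by apply: mulr_ge0; clear -a0 K3; lra.
have p5 : 0 <= (rr - alpha) * ((k.+1)%:R * ph).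
  by apply: mulr_ge0; clear -rra K3 ph450; lra.
have cbig : 3 * alpha * (k%:R * tau) + 1 <= #|Qr|%:R.
  clear -hQrR hV hFc2 pFc psj p1 p2 p3 p4 p5 aph75 a6 a0 f2le ph450.
  lra.
have [x1 x1Q] : exists x1, x1 \in Qr.
  apply/set0Pn; rewrite -card_gt0 -(ltr0n R).
  have : 0 <= 3 * alpha * (k%:R * tau) by apply: mulr_ge0; [clear -a0; lra | apply: mulr_ge0; clear -kk2 tau0; lra].
  clear -cbig; lra.
have sumgt : #|Qr|%:R * D < \sum_(x in Qr) distT rho T x.
  rewrite mulr_natl -sumr_const; apply: ltr_sum.
    by apply/hasP; exists x1 => //; rewrite mem_index_enum.
  move=> x xQr; apply: QD; by move: xQr; rewrite inE => /andP[].
have RR0 : 0 <= Rr rho (2 * alpha * (k.+1)%:R * ph) P2 T.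
  by rewrite RrE; apply: sumr_ge0 => x _; exact: distT_ge0.
have psi0 : 0 <= psi by rewrite /psi; apply: mulr_ge0 => //; rewrite divr_ge0 //; clear -a0; lra.
have D0 : 0 <= D by rewrite /D divr_ge0 // mulr_ge0 //; clear -kk2 tau0; lra.
have epsi : 3 * alpha * psi = Rr rho (2 * alpha * (k.+1)%:R * ph) P2 T.
  by rewrite /psi; field; rewrite lt0r_neq0.
have eD : D * (k%:R * tau) = psi.
  rewrite /D divfK // mulf_neq0 // lt0r_neq0 //; clear -kk2 tau0; lra.
have eD3 : alpha * (D * (k%:R * tau)) = alpha * psi by rewrite eD.
have p6 : 0 <= (#|Qr|%:R - 3 * alpha * (k%:R * tau)) * D.
  by apply: mulr_ge0 => //; clear -cbig; lra.
clear -sumgt sumQ RrE epsi eD3 p6.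
rewrite -RrE in sumQ.
lra.
Qed.
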